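(* Let $q$ be a prime power, $u,v$ non-zero in $\mathbb{F}_q$, and write $\mathrm{Rad}(q-1)=k\,p_1\cdots p_s$ with $k$ a divisor and $p_1,\ldots,p_s$ distinct primes. Let $N_{q-1}=N(q-1,q-1,q-1,q-1)$ and $N_{k,q-1}=N(k,k,k,q-1)$. Then $$N_{q-1}\geq \sum_{i=1}^s\{N(p_ik,k,k,q-1)+N(k,p_ik,k,q-1)+N(k,k,p_ik,q-1)\}-(3s-1)N_{k,q-1}.$$ Hence, with $\delta_3=1-3\sum_{i=1}^s 1/p_i$, $$N_{q-1}\geq \sum_{i=1}^s\{[N(p_ik,k,k,q-1)-\theta(p_i)N_{k,q-1}]+[N(k,p_ik,k,q-1)-\theta(p_i)N_{k,q-1}]+[N(k,k,p_ik,q-1)-\theta(p_i)N_{k,q-1}]\}+\delta_3N_{k,q-1}.$$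
   Context: $\mathrm{Rad}(m)$ is the product of the distinct primes dividing $m$; $\theta(m)=\phi(m)/m$. For a divisor $e$ of $q-1$, a non-zero $a\in\mathbb{F}_q$ is $e$-free if $a=b^d$ with $b\in\mathbb{F}_q$, $d\mid e$ implies $d=1$. For divisors $e_1,\ldots,e_4$ of $q-1$, $N(e_1,e_2,e_3,e_4)$ is the number of pairs of non-zero $a,b\in\mathbb{F}_q$ such that $a$, $b$, $ua+vb$, $va^{-1}+ub^{-1}$ are (non-zero and) respectively $e_1$-, $e_2$-, $e_3$-, $e_4$-free. *)

(* Defs.v *)
From HB Require Import structures.
From mathcomp Require Import all_boot all_order all_algebra all_field.
From mathcomp Require Import boolp.
Set Implicit Arguments. Unset Strict Implicit. Unset Printing Implicit Defensive.
Import Order.TTheory GRing.Theory Num.Theory.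
Local Open Scope ring_scope.

Definition Rad (m : nat) : nat := (\prod_(p <- primes m) p)%N.

Definition theta (m : nat) : rat := (totient m)%:R / m%:R.

Definition efree (F : finFieldType) (e : nat) (a : F) : Prop :=
  a != 0 /\ forall (d : nat) (b : F), (d %| e)%N -> a = b ^+ d -> d = 1%N.

Definition Ncount (F : finFieldType) (u v : F) (e1 e2 e3 e4 : nat) : nat :=
  #|[set ab : F * F | [&& ab.1 != 0, ab.2 != 0,
      `[< efree e1 ab.1 >], `[< efree e2 ab.2 >],
      `[< efree e3 (u * ab.1 + v * ab.2) >] &
      `[< efree e4 (v * ab.1^-1 + u * ab.2^-1) >] ] ]|.

(* Main.v *)
Require Import Defs.
From HB Require Import structures.
From mathcomp Require Import all_boot all_order all_algebra all_field.
From mathcomp Require Import boolp zify ring lra.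
Import Order.TTheory GRing.Theory Num.Theory.
Local Open Scope ring_scope.

Lemma efreeP (F : finFieldType) (n : nat) (a : F) : (0 < n)%N ->
  efree n a <-> (a != 0 /\ forall r b, prime r -> (r %| n)%N -> a <> b ^+ r).
Proof.
move=> n0; split.
  case=> a0 H; split => // r b pr rn ab.
  by have := H r b rn ab => r1; rewrite r1 in pr.
case=> a0 H; split => // d b dn ab.
have d0 : (0 < d)%N by case: d dn {ab} => //; rewrite dvd0n => /eqP n00; rewrite n00 in n0.
case: (ltngtP d 1) => // [|d1]; first by lia.
have pr := pdiv_prime d1.
exfalso; apply: (H (pdiv d) (b ^+ (d %/ pdiv d)) pr).
  exact: dvdn_trans (pdiv_dvd d) dn.
by rewrite -exprM divnK // pdiv_dvd.
Qed.

Lemma prime_dvd_prodseq r s : prime r -> all prime s ->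
  (r %| \prod_(p <- s) p)%N = (r \in s).
Proof.
move=> pr; elim: s => [|p s IH] /=; first by rewrite big_nil dvdn1 in_nil; case: eqP pr => // ->.
by move/andP=> [pp ps]; rewrite big_cons Euclid_dvdM // dvdn_prime2 // in_cons IH.
Qed.

Lemma efree_mul (F : finFieldType) p k (a : F) : prime p -> (0 < k)%N ->
  efree (p * k) a <-> efree p a /\ efree k a.
Proof.
move=> pp k0; have p0 := prime_gt0 pp.
rewrite !efreeP ?muln_gt0 ?p0 //; split.
  case=> a0 H; split; split => // r b pr rd; apply: H => //; rewrite Euclid_dvdM // rd ?orbT //.
case=> [[a0 H1] [_ H2]]; split => // r b pr; rewrite Euclid_dvdM // => /orP [] rd.
  exact: H1. exact: H2.
Qed.

Lemma efree_q1 (F : finFieldType) n k ps (a : F) : (0 < n)%N -> (0 < k)%N -> all prime ps ->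
  Rad n = (k * \prod_(p <- ps) p)%N ->
  efree n a <-> efree k a /\ (forall p, p \in ps -> efree p a).
Proof.
move=> n0 k0 aps hR.
have radP r : prime r -> (r %| n)%N = (r %| k)%N || (r \in ps).
  move=> pr; rewrite -prime_dvd_prodseq // -Euclid_dvdM // -hR /Rad.
  rewrite prime_dvd_prodseq ?mem_primes ?pr ?n0 //.
  by apply/allP => x; rewrite mem_primes => /and3P[].
rewrite !efreeP //; split.
  case=> a0 H; split; first by split => // r b pr rk; apply: H => //; rewrite radP // rk.
  move=> p ps0; have pp := allP aps p ps0; rewrite efreeP ?prime_gt0 //; split => // r b pr rp.
  apply: H => //; rewrite radP //; move: rp; rewrite dvdn_prime2 // => /eqP ->; rewrite ps0 orbT //.
case=> [[a0 H1] H2]; split => // r b pr; rewrite radP // => /orP [] rd.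
  exact: H1.
have := H2 r rd; rewrite efreeP ?prime_gt0 // => -[_ H]; apply: H => //.
Qed.
Lemma sieve (T : finType) (B : {set T}) (h : nat -> pred T) (s : seq nat) :
  (#|B| <= #|[set x in B | all (fun p => h p x) s]| + \sum_(p <- s) #|[set x in B | ~~ h p x]|)%N.
Proof.
elim: s B => [|p s IH] B.
  rewrite big_nil addn0; apply: subset_leq_card; apply/subsetP => x xB; by rewrite inE xB.
rewrite big_cons; apply: (leq_trans (IH B)); rewrite addnA leq_add2r.
apply: leq_trans (leq_card_setU _ _); apply: subset_leq_card; apply/subsetP => x.
by rewrite !inE /=; case: (x \in B); case: (h p x); case: (all _ s).
Qed.

Lemma split3 (T : finType) (B : {set T}) (h1 h2 h3 : pred T) :
  (#|[set x in B | ~~ (h1 x && h2 x && h3 x)]| <=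
   #|[set x in B | ~~ h1 x]| + #|[set x in B | ~~ h2 x]| + #|[set x in B | ~~ h3 x]|)%N.
Proof.
apply: leq_trans (leq_add (leq_card_setU _ _) (leqnn _)).
apply: leq_trans (leq_card_setU _ _); apply: subset_leq_card; apply/subsetP => x.
by rewrite !inE; case: (x \in B); case: (h1 x); case: (h2 x); case: (h3 x).
Qed.

Lemma cardsplit (T : finType) (B : {set T}) (h : pred T) :
  (#|[set x in B | h x]| + #|[set x in B | ~~ h x]| = #|B|)%N.
Proof.
rewrite -(cardsID [set x | h x] B); by congr addn; apply: eq_card => x; rewrite !inE // andbC.
Qed.

Lemma asb_mul (F : finFieldType) p k (a : F) : prime p -> (0 < k)%N ->
  `[< efree (p * k) a >] = `[< efree p a >] && `[< efree k a >].
Proof.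
move=> pp k0; apply/asboolP/andP => [/((@efree_mul _ _ _ a pp k0)) [H1 H2] | [/asboolP H1 /asboolP H2]].
  by split; apply/asboolP.
by apply/efree_mul.
Qed.

Lemma asb_q1 (F : finFieldType) n k ps (a : F) : (0 < n)%N -> (0 < k)%N -> all prime ps ->
  Rad n = (k * \prod_(p <- ps) p)%N ->
  `[< efree n a >] = `[< efree k a >] && all (fun p => `[< efree p a >]) ps.
Proof.
move=> n0 k0 aps hR; apply/asboolP/andP => [/((@efree_q1 _ _ _ _ a n0 k0 aps hR)) [H1 H2] | [/asboolP H1 /allP H2]].
  by split; [apply/asboolP | apply/allP => p /H2 /asboolP].
by apply/((@efree_q1 _ _ _ _ a n0 k0 aps hR)); split => // p /H2 /asboolP.
Qed.

Lemma all3 (T : Type) (f g h : pred T) s :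
  all (fun p => f p && g p && h p) s = [&& all f s, all g s & all h s].
Proof. by elim: s => //= p s ->; case: (f p); case: (g p); case: (h p); case: (all f s); case: (all g s). Qed.
Theorem lemma5p2 (F : finFieldType) (u v : F) (k : nat) (ps : seq nat) :
  u != 0 -> v != 0 ->
  uniq ps -> all prime ps ->
  Rad #|F|.-1 = (k * \prod_(p <- ps) p)%N ->
  let q1 := #|F|.-1 in
  let Nq := (Ncount u v q1 q1 q1 q1)%:R : rat in
  let Nk := (Ncount u v k k k q1)%:R : rat in
  let s := size ps in
  (\sum_(p <- ps) ((Ncount u v (p * k) k k q1)%:R + (Ncount u v k (p * k) k q1)%:R
                   + (Ncount u v k k (p * k) q1)%:R)
     - (3 * s%:R - 1) * Nk <= Nq)
  /\
  (\sum_(p <- ps) (((Ncount u v (p * k) k k q1)%:R - theta p * Nk)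
                   + ((Ncount u v k (p * k) k q1)%:R - theta p * Nk)
                   + ((Ncount u v k k (p * k) q1)%:R - theta p * Nk))
     + (1 - 3 * \sum_(p <- ps) (p%:R)^-1) * Nk <= Nq).
Proof.
move=> u0 v0 ups aps hR q1 Nq Nk s.
have q10 : (0 < q1)%N by rewrite /q1; have := card_finNzRing_gt1 F; case: #|_| => [|[|n]].
have k0 : (0 < k)%N.
  have : (0 < Rad #|F|.-1)%N.
    by rewrite /Rad big_seq; apply: prodn_cond_gt0 => p; rewrite mem_primes => /and3P[/prime_gt0].
  by rewrite hR muln_gt0 => /andP[].
set B := [set x : F * F | [&& x.1 != 0, x.2 != 0,
      `[< efree k x.1 >], `[< efree k x.2 >],
      `[< efree k (u * x.1 + v * x.2) >] &
      `[< efree q1 (v * x.1^-1 + u * x.2^-1) >] ] ].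
pose h1 p (x : F * F) := `[< efree p x.1 >].
pose h2 p (x : F * F) := `[< efree p x.2 >].
pose h3 p (x : F * F) := `[< efree p (u * x.1 + v * x.2) >].
have E1 p : p \in ps -> Ncount u v (p * k) k k q1 = #|[set x in B | h1 p x]|.
  move=> pin; apply: eq_card => x; rewrite !inE asb_mul ?(allP aps p pin) //.
  rewrite /h1; move: (x.1 != 0) (x.2 != 0) `[< efree p x.1 >] `[< efree k x.1 >] => a b c d; by case: a; case: b; case: c; case: d; rewrite /= ?andbT ?andbF.
have E2 p : p \in ps -> Ncount u v k (p * k) k q1 = #|[set x in B | h2 p x]|.
  move=> pin; apply: eq_card => x; rewrite !inE asb_mul ?(allP aps p pin) //.
  rewrite /h2; move: (x.1 != 0) (x.2 != 0) `[< efree k x.1 >] `[< efree p x.2 >] `[< efree k x.2 >] => a b c d e.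
  by case: a; case: b; case: c; case: d; case: e; rewrite /= ?andbT ?andbF.
have E3 p : p \in ps -> Ncount u v k k (p * k) q1 = #|[set x in B | h3 p x]|.
  move=> pin; apply: eq_card => x; rewrite !inE asb_mul ?(allP aps p pin) //.
  rewrite /h3; move: (x.1 != 0) (x.2 != 0) `[< efree k x.1 >] `[< efree k x.2 >] `[< efree p (u * x.1 + v * x.2) >] `[< efree k (u * x.1 + v * x.2) >] => a b c d e f.
  by case: a; case: b; case: c; case: d; case: e; case: f; rewrite /= ?andbT ?andbF.
have EQ : Ncount u v q1 q1 q1 q1 = #|[set x in B | all (fun p => h1 p x && h2 p x && h3 p x) ps]|.
  apply: eq_card => x; rewrite !inE !(@asb_q1 F q1 k ps _ q10 k0 aps hR) all3 /h1 /h2 /h3.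
  move: (x.1 != 0) (x.2 != 0) `[< efree k x.1 >] `[< efree k x.2 >] `[< efree k (u * x.1 + v * x.2) >] `[< efree k (v * x.1^-1 + u * x.2^-1) >] => a b c d e f.
  move: (all _ ps) (all _ ps) (all _ ps) (all _ ps) => g h i j.
  by case: a; case: b; case: c; case: d; case: e; case: f; case: g; case: h; case: i; case: j.
pose N1 p := #|[set x in B | h1 p x]|.
pose N2 p := #|[set x in B | h2 p x]|.
pose N3 p := #|[set x in B | h3 p x]|.
pose bad p := #|[set x in B | ~~ (h1 p x && h2 p x && h3 p x)]|.
pose NS := #|[set x in B | all (fun p => h1 p x && h2 p x && h3 p x) ps]|.
have Hs : (#|B| <= NS + \sum_(p <- ps) bad p)%N := @sieve _ B (fun p x => h1 p x && h2 p x && h3 p x) ps.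
have H1 : (\sum_(p<-ps) bad p + \sum_(p<-ps) (N1 p + N2 p + N3 p) <= 3 * #|B| * size ps)%N.
  rewrite -big_split /= -sum1_size big_distrr /=; apply: leq_sum => p _.
  have := @split3 _ B (h1 p) (h2 p) (h3 p); have := @cardsplit _ B (h1 p).
  have := @cardsplit _ B (h2 p); have := @cardsplit _ B (h3 p); rewrite /bad /N1 /N2 /N3. set b := #|B|. set c1 := #|[set x in B | ~~ h1 p x]|. set c2 := #|[set x in B | h1 p x]|. lia.
have Hn : (#|B| + \sum_(p<-ps) (N1 p + N2 p + N3 p) <= NS + 3 * #|B| * size ps)%N.
  move: Hs H1; set m := (3 * #|B| * size ps)%N; set y := (\sum_(p<-ps) bad p)%N.
  set z := (\sum_(p<-ps) (N1 p + N2 p + N3 p))%N; lia.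
have Esum : \sum_(p <- ps) ((Ncount u v (p * k) k k q1)%:R + (Ncount u v k (p * k) k q1)%:R
                   + (Ncount u v k k (p * k) q1)%:R) = (\sum_(p<-ps) (N1 p + N2 p + N3 p))%:R :> rat.
  by rewrite natr_sum; apply: eq_big_seq => p pin; rewrite E1 // E2 // E3 // !natrD.
have ENk : Nk = #|B|%:R by [].
have ENq : Nq = NS%:R by rewrite /Nq EQ.
have part1 : \sum_(p <- ps) ((Ncount u v (p * k) k k q1)%:R + (Ncount u v k (p * k) k q1)%:R
                   + (Ncount u v k k (p * k) q1)%:R) - (3 * s%:R - 1) * Nk <= Nq.
  rewrite Esum ENk ENq; move: Hn; rewrite -(ler_nat rat) !natrD !natrM /s.
  move: (_%:R : rat) (_%:R : rat) (_%:R : rat) (_%:R : rat) => a b c d.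
  move=> H; have -> : d - (a * (size ps)%:R - 1) * c = (c + d) - a * c * (size ps)%:R by ring.
  by rewrite lerBlDr.
split => //.
have thp p : p \in ps -> theta p = 1 - p%:R^-1.
  move=> pin; have pp := allP aps p pin; rewrite /theta totient_prime //.
  have p0 := prime_gt0 pp; rewrite -{2 3}(prednK p0) -addn1 !natrD.
  have nz : (p.-1)%:R + 1%:R != 0 :> rat by rewrite -natrD pnatr_eq0 addn1.
  by field.
have sumc (c : rat) (t : seq nat) : \sum_(p <- t) c = c * (size t)%:R.
  elim: t => [|x t IH]; first by rewrite big_nil mulr0.
  by rewrite big_cons IH /= mulrS; ring.
apply: le_trans part1; rewrite le_eqVlt; apply/orP; left; apply/eqP.
rewrite (eq_big_seq (fun p => ((Ncount u v (p * k) k k q1)%:R + (Ncount u v k (p * k) k q1)%:R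
                   + (Ncount u v k k (p * k) q1)%:R) - 3 * Nk + 3 * Nk * p%:R^-1)); last first.
  by move=> p pin; rewrite thp //; ring.
rewrite big_split big_split /= sumc -mulr_sumr /s; ring.
Qed.
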